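(* Let $\mathbf{H}$ be a finite commutative semihypergroup with states $e_1,\dots,e_n$ that is derived from a group. Then there exist an abelian group $G$ of order $n$ and an enumeration $G=\{g_1,\dots,g_n\}$ such that every matrix $A_i$ ($i=1,\dots,n$) is a linear combination of the matrices $G_1,\dots,G_n$ of the regular representation of $G$, where $G_l$ is the $n\times n$ permutation matrix with $(k,j)$ entry equal to $1$ if $g_l g_j=g_k$ and $0$ otherwise.
   Context: A finite commutative semihypergroup $\mathbf{H}$ with $n$ states $e_1,\dots,e_n$ is given by a convolution $e_i*e_j=\sum_{k=1}^n a_{i,j}(k)e_k$ ($i,j=1,\dots,n$), extended bilinearly, where $a_{i,j}(k)\ge 0$, $\sum_{k=1}^n a_{i,j}(k)=1$ for all $i,j$, the convolution is associative and commutative ($a_{i,j}(k)=a_{j,i}(k)$). Let $a_{i,j}\in\mathbb{R}^n$ denote the column vector $(a_{i,j}(1),\dots,a_{i,j}(n))^T$; let $A_i$ be the $n\times n$ matrix with columns $a_{i,1},\dots,a_{i,n}$ (so its $(k,j)$ entry is $a_{i,j}(k)$) and $B_i$ the matrix with columns $a_{1,i},\dots,a_{n,i}$. $\mathbf{H}$ is called derived from a group if it satisfies condition (A): the set $\{a_{i,j}: 1\le i,j\le n\}$ contains exactly $n$ distinct vectors, and for each $i$ the columns of $A_i$ are linearly independent and the columns of $B_i$ are linearly independent. *)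

(* Defs.v *)
From HB Require Import structures.
From mathcomp Require Import all_boot all_order all_algebra all_fingroup.
Set Implicit Arguments. Unset Strict Implicit. Unset Printing Implicit Defensive.
Import Order.TTheory GRing.Theory Num.Theory.
Local Open Scope ring_scope.

(* Structure constants: a i j k = a_{i,j}(k), i.e. e_i * e_j = sum_k a i j k e_k. *)
Section HG.
Variables (R : realFieldType) (n : nat).
Variable a : 'I_n -> 'I_n -> 'I_n -> R.

Definition is_comm_semihypergroup : Prop :=
  [/\ (forall i j k, 0 <= a i j k),
      (forall i j, \sum_(k < n) a i j k = 1),
      (forall i j k, a i j k = a j i k) &
      (* associativity: (e_i * e_j) * e_l = e_i * (e_j * e_l) *)
      (forall i j l m, \sum_(k < n) a i j k * a k l m
                     = \sum_(k < n) a j l k * a i k m)].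

Definition avec (i j : 'I_n) : 'cV[R]_n := \col_k a i j k.

Definition Amat (i : 'I_n) : 'M[R]_n := \matrix_(k, j) a i j k.
Definition Bmat (i : 'I_n) : 'M[R]_n := \matrix_(k, j) a j i k.

Definition cols_independent (M : 'M[R]_n) : bool := row_free M^T.

Definition derived_from_group : Prop :=
  [/\ size (undup [seq avec i j | i <- enum 'I_n, j <- enum 'I_n]) = n,
      (forall i, cols_independent (Amat i)) &
      (forall i, cols_independent (Bmat i))].
End HG.

Definition regmx (R : realFieldType) (n : nat) (gT : finGroupType) (g : 'I_n -> gT)
  (l : 'I_n) : 'M[R]_n :=
  \matrix_(k, j) (if (g l * g j)%g == g k then 1 else 0).

(* Main.v *)
Require Import Defs.
From HB Require Import structures.
From mathcomp Require Import all_boot all_order all_algebra all_fingroup.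
Import Order.TTheory GRing.Theory Num.Theory.
Local Open Scope ring_scope.

Lemma cols_inj (R : realFieldType) (n : nat) (M : 'M[R]_n) :
  row_free M^T -> injective (fun z => col z M).
Proof.
rewrite row_free_unit unitmx_tr => uM z z' /= H.
have : delta_mx z 0 = delta_mx z' 0 :> 'cV[R]_n.
  by rewrite -(mulKmx uM (delta_mx z 0)) -(mulKmx uM (delta_mx z' 0)) -!colE H.
move/matrixP/(_ z 0); rewrite !mxE !eqxx /=.
by case: eqP => // _ /eqP; rewrite oner_eq0.
Qed.

Lemma sum_ind1 (R : realFieldType) (n : nat) (f : 'I_n -> R) m :
  \sum_k f k * (m == k)%:R = f m.
Proof.
rewrite (bigD1 m) //= eqxx mulr1 big1 ?addr0 // => k /negbTE.
by rewrite eq_sym => ->; rewrite mulr0.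
Qed.

Lemma sum_ind2 (R : realFieldType) (n : nat) (f : 'I_n -> R) m :
  \sum_k (m == k)%:R * f k = f m.
Proof. by rewrite -(@sum_ind1 R n f m); apply: eq_bigr => k _; rewrite mulrC. Qed.

Lemma onto_L (R : realFieldType) (n : nat) (T : eqType) (L : seq T) (f : 'I_n -> T) :
  size L = n -> injective f -> (forall z, f z \in L) ->
  forall v, v \in L -> exists z, f z = v.
Proof.
move=> hs fi fL v vL.
have u : uniq (map f (enum 'I_n)) by rewrite map_inj_uniq ?enum_uniq.
have sub : {subset map f (enum 'I_n) <= L} by move=> x /mapP [z _ ->].
have hle : (size L <= size (map f (enum 'I_n)))%N by rewrite size_map size_enum_ord hs.
have [_ e] := uniq_min_size u sub hle.
by move: vL; rewrite -e => /mapP [z _ ->]; exists z.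
Qed.

Theorem corollary4 (R : realFieldType) (n : nat) (a : 'I_n -> 'I_n -> 'I_n -> R) :
  (0 < n)%N ->
  is_comm_semihypergroup a ->
  derived_from_group a ->
  exists (gT : finGroupType) (g : 'I_n -> gT),
    [/\ abelian [set: gT], #|gT| = n, bijective g &
        forall i : 'I_n, exists c : 'I_n -> R,
          Amat a i = \sum_(l < n) c l *: regmx R g l].
Proof.
move=> hn [_ _ hcomm hassoc] [hsz hA hB].
pose o : 'I_n := Ordinal hn.
pose L := undup [seq avec a i j | i <- enum 'I_n, j <- enum 'I_n].
have inL i j : avec a i j \in L by rewrite mem_undup; apply: allpairs_f; rewrite mem_enum.
have colA i z : col z (Amat a i) = avec a i z by apply/matrixP => k l; rewrite !mxE.
have colB j i : col i (Bmat a j) = avec a i j by apply/matrixP => k l; rewrite !mxE.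
have injA i : injective (avec a i).
  by move=> z z'; rewrite -!colA; move=> h; have := @cols_inj R n _ (hA i) z z'; apply; exact: h.
have injB j : injective (fun i => avec a i j).
  by move=> z z' /=; rewrite -!colB; move=> h; have := @cols_inj R n _ (hB j) z z'; apply; exact: h.
have ontoA i v : v \in L -> exists z, avec a i z = v.
  by apply: onto_L => //; apply: inL.
have ontoB j v : v \in L -> exists i, avec a i j = v.
  by apply: (@onto_L R n _ L (fun i => avec a i j)) => // z; apply: inL.
pose rf j y := odflt y [pick z | avec a o z == avec a j y].
have rfE j y : avec a o (rf j y) = avec a j y.
  rewrite /rf; case: pickP => [z /eqP //|].
  by have [z hz] := ontoA o _ (inL j y) => /(_ z); rewrite hz eqxx.
have rf_inj j : injective (rf j).
  by move=> y y' h; apply: (injA j); rewrite -(rfE j y) -(rfE j y') h.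
pose rho j : {perm 'I_n} := perm (rf_inj j).
have rhoE j y : avec a o (rho j y) = avec a j y by rewrite permE rfE.
have rhoE' j y k : a o (rho j y) k = a j y k.
  by have := congr1 (fun v : 'cV_n => v k 0) (rhoE j y); rewrite !mxE.
pose P j : 'M[R]_n := \matrix_(k, y) ((rho j y == k)%:R).
have MP (M : 'M[R]_n) j : M *m P j = \matrix_(m, y) M m (rho j y).
  by apply/matrixP => m y; rewrite !mxE; under eq_bigr do rewrite mxE; rewrite sum_ind1.
have PM (M : 'M[R]_n) j : P j *m M = \matrix_(k, y) M ((rho j)^-1%g k) y.
  apply/matrixP => k y; rewrite !mxE.
  rewrite -[RHS](@sum_ind2 R n (fun m => M m y) ((rho j)^-1%g k)) /=.
  apply: eq_bigr => m _; rewrite mxE; congr (_ * _); congr (_%:R); congr (nat_of_bool _).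
  by apply/idP/idP => /eqP h; apply/eqP; [rewrite -h permK | rewrite -h permKV].
have AP j : Amat a o *m P j = Amat a j.
  by rewrite MP; apply/matrixP => m y; rewrite !mxE rhoE'.
have comm i j : Amat a i *m Amat a j = Amat a j *m Amat a i.
  apply/matrixP => m l; rewrite !mxE.
  transitivity (\sum_k a i j k * a k l m).
    by rewrite hassoc; apply: eq_bigr => k _; rewrite !mxE mulrC.
  transitivity (\sum_k a j i k * a k l m); first by apply: eq_bigr => k _; rewrite hcomm.
  by rewrite hassoc; apply: eq_bigr => k _; rewrite !mxE mulrC.
have uo : Amat a o \in unitmx by rewrite -unitmx_tr -row_free_unit; apply: hA.
have canc (X Y : 'M[R]_n) : Amat a o *m X = Amat a o *m Y -> X = Y.
  by move=> h; rewrite -(mulKmx uo X) h mulKmx.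
have F2mx i j : Amat a i *m P j = P j *m Amat a i.
  by apply: canc; rewrite !mulmxA (comm o i) -mulmxA !AP comm.
have F1mx i j : P i *m P j = P j *m P i.
  apply: canc; rewrite !mulmxA !AP F2mx.
  by rewrite -{1}(AP i) mulmxA -F2mx AP.
have F2 i j y k : a i (rho j y) (rho j k) = a i y k.
  have := congr1 (fun M : 'M_n => M (rho j k) y) (F2mx i j).
  by rewrite MP PM !mxE permK.
have F1 i j : commute (rho i) (rho j).
  apply/permP => y; rewrite !permM.
  have := congr1 (fun M : 'M_n => M (rho i (rho j y)) y) (F1mx i j).
  rewrite !MP !mxE eqxx.
  by case: eqP => // _ /eqP; rewrite oner_eq0.
have F3 x : exists i, rho i o == x.
  have [i hi] := ontoB o _ (inL o x).
  by exists i; apply/eqP/(injA o); rewrite rhoE hi.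
pose ix x := xchoose (F3 x).
have ixE x : rho (ix x) o = x by apply/eqP; apply: (xchooseP (F3 x)).
pose E := [set rho i | i : 'I_n].
pose H := <<E>>%G.
have rhoH i : rho i \in H by apply: mem_gen; apply: imset_f.
have abH : abelian H.
  rewrite abelian_gen; apply/centsP => _ /imsetP [i _ ->] _ /imsetP [j _ ->].
  exact: F1.
have comH x y : x \in H -> y \in H -> commute x y.
  by move=> hx hy; apply: (centsP abH).
have reg h h' : h \in H -> h' \in H -> h o = h' o -> h = h'.
  move=> hh hh' e; apply/permP => y.
  rewrite -(ixE y) -!permM (comH _ _ (rhoH _) hh) (comH _ _ (rhoH _) hh').
  by rewrite !permM e.
pose gT := subg_of H.
pose g x : gT := subg H (rho (ix x)).
have gv x : sgval (g x) = rho (ix x) by rewrite subgK.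
pose gi (u : gT) := sgval u o.
have gK : cancel g gi by move=> x; rewrite /gi gv ixE.
have giK : cancel gi g.
  move=> u; apply: val_inj => /=; rewrite gv; apply: reg; [exact: rhoH | exact: subgP | by rewrite ixE].
exists gT, g; split.
- apply/centsP => u _ v _; apply: val_inj => /=.
  exact: comH (subgP u) (subgP v).
- by rewrite -(bij_eq_card (Bijective gK giK)) card_ord.
- exact: Bijective gK giK.
move=> i; exists (fun l => a i o l).
apply/matrixP => k j; rewrite summxE mxE.
have ge l : (g l * g j == g k)%g = (rho (ix j) l == k).
  rewrite -val_eqE /= !gv.
  apply/idP/idP => /eqP h.
    by rewrite -(ixE l) -permM h ixE.
  apply/eqP; apply: reg; rewrite ?groupM //= permM ixE h ixE //.
rewrite (eq_bigr (fun l => a i o l * ((rho (ix j))^-1%g k == l)%:R)); last first.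
  move=> l _; rewrite !mxE ge; congr (_ * _).
  have -> : (rho (ix j) l == k) = ((rho (ix j))^-1%g k == l).
    by apply/idP/idP => /eqP h; apply/eqP; [rewrite -h permK | rewrite -h permKV].
  by case: (_ == _).
rewrite sum_ind1 -(F2 i (ix j) o) ixE permKV //.
Qed.
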